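(* Let $n\ge 1$, $0\le d\le n$, and let $g:\mathcal{X}_n\to[0,1]$ belong to $\mathcal{G}_n^{(d)}$, so that its angle map has the multilinear expansion \[ \Theta_g(b)=\sum_{S\subseteq[n],\,|S|\le d}\widehat{\Theta}_S\,\chi_S(b),\qquad \widehat{\Theta}_S=\sum_{T\subseteq S}(-1)^{|S\setminus T|}\,\Theta_g(\mathbf{1}_T). \] Then the encoding operator factors as \[ G_g=\prod_{S\subseteq[n],\,|S|\le d} C^S R_Y\bigl(\widehat{\Theta}_S\bigr) \] (the factors may be taken in any order). Consequently $G_g$ can be implemented with exactly $\sum_{k=0}^{d}\binom{n}{k}$ controlled-$R_Y$ gates, one for each subset $S\subseteq[n]$ with $|S|\le d$.
   Context: Let $\mathbb{B}=\{0,1\}$, $[n]=\{0,1,\dots,n-1\}$, $N=2^n$. The uniform grid is $\mathcal{X}_n=\{x_i=i/N: i=0,\dots,N-1\}$, and for $b=(b_0,\dots,b_{n-1})\in\mathbb{B}^n$ the grid index is $i(b)=\sum_k b_k2^k$. The angle map of $g:\mathcal{X}_n\to[0,1]$ is $\Theta_g:\mathbb{B}^n\to[0,\pi]$, $\Theta_g(b)=2\arcsin\bigl(\sqrt{g(x_{i(b)})}\bigr)$. For $S\subseteq[n]$, $\chi_S(b)=\prod_{j\in S}b_j$, and $\mathbf{1}_T\in\mathbb{B}^n$ is the indicator vector of $T\subseteq[n]$. Every $f:\mathbb{B}^n\to\mathbb{R}$ has a unique expansion $f=\sum_{S\subseteq[n]}\hat f_S\chi_S$; its multilinear degree is $\max\{|S|:\hat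 f_S\neq 0\}$. The class $\mathcal{G}_n^{(d)}$ is the set of $g:\mathcal{X}_n\to[0,1]$ with $\deg(\Theta_g)\le d$. Let $R_Y(\theta)=\begin{pmatrix}\cos(\theta/2)&-\sin(\theta/2)\\ \sin(\theta/2)&\cos(\theta/2)\end{pmatrix}$. On $\mathbb{C}^{N}\otimes\mathbb{C}^2$ with standard basis $\{\mathbf{u}_b\otimes \mathbf{u}^{(2)}_c\}$ (index register indexed by $b\in\mathbb{B}^n$, one ancilla qubit), the encoding operator $G_g$ is the block-diagonal unitary acting by $G_g(\mathbf{u}_b\otimes v)=\mathbf{u}_b\otimes R_Y(\Theta_g(b))v$ for all $v\in\mathbb{C}^2$; in particular $G_g(\mathbf{u}_{b}\otimes\mathbf{u}^{(2)}_0)=\mathbf{u}_{b}\otimes(\sqrt{1-g(x_{i(b)})}\,\mathbf{u}^{(2)}_0+\sqrt{g(x_{i(b)})}\,\mathbf{u}^{(2)}_1)$. For $S\subseteq[n]$ and $\alpha\in\mathbb{R}$, the controlled gate $C^SR_Y(\alpha)$ acts by $\mathbf{u}_b\otimes v\mapsto \mathbf{u}_b\otimes R_Y(\alpha\,\chi_S(b))v$, i.e. it applies $R_Y(\alpha)$ to the ancilla iff all index qubits in $S$ equal $1$ (for $S=\emptyset$ it is an unconditional rotation). *)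

(* Defs.v *)
From HB Require Import structures.
From mathcomp Require Import all_boot all_order all_algebra.
From mathcomp Require Import reals trigo.
Set Implicit Arguments. Unset Strict Implicit. Unset Printing Implicit Defensive.
Import Order.TTheory GRing.Theory Num.Theory.
Local Open Scope ring_scope.

Section Defs.
Variable R : realType.
Variable n : nat.

Definition bits := {ffun 'I_n -> bool}.

Definition gidx (b : bits) : nat := (\sum_(k < n) (b k : nat) * 2 ^ k)%N.

Definition gridpt (i : nat) : R := i%:R / (2 ^ n)%:R.

Definition Theta (g : R -> R) (b : bits) : R :=
  2 * asin (Num.sqrt (g (gridpt (gidx b)))).

Definition chi (S : {set 'I_n}) (b : bits) : R := \prod_(j in S) (b j)%:R.

Definition ind (T : {set 'I_n}) : bits := [ffun j => j \in T].

Definition fhat (f : bits -> R) (S : {set 'I_n}) : R :=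
  \sum_(T : {set 'I_n} | T \subset S) (-1) ^+ #|S :\: T| * f (ind T).

Definition deg_le (f : bits -> R) (d : nat) : Prop :=
  forall S : {set 'I_n}, (d < #|S|)%N -> fhat f S = 0.

(* basis of C^N (x) C^2 : pairs (b, c), c = ancilla bit (false = |0>, true = |1>) *)
Definition basis := (bits * bool)%type.

(* operators on the space, given by their (real) matrix entries in this basis *)
Definition op := basis -> basis -> R.

Definition op_mul (A B : op) : op := fun x y => \sum_(z : basis) A x z * B z y.
Definition op_id : op := fun x y => (x == y)%:R.

(* R_Y(theta) entry (row c, column c') *)
Definition RY (theta : R) (c c' : bool) : R :=
  match c, c' with
  | false, false => cos (theta / 2)
  | false, true => - sin (theta / 2)
  | true, false => sin (theta / 2)
  | true, true => cos (theta / 2)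
  end.

(* encoding operator G_g : u_b (x) v |-> u_b (x) R_Y(Theta_g(b)) v *)
Definition Genc (g : R -> R) : op :=
  fun x y => if x.1 == y.1 then RY (Theta g x.1) x.2 y.2 else 0.

(* controlled gate C^S R_Y(alpha) : u_b (x) v |-> u_b (x) R_Y(alpha chi_S(b)) v *)
Definition CRY (S : {set 'I_n}) (alpha : R) : op :=
  fun x y => if x.1 == y.1 then RY (alpha * chi S x.1) x.2 y.2 else 0.

Definition op_prod (s : seq op) : op := foldr op_mul op_id s.

End Defs.

Arguments gridpt {R} n i.
Arguments Theta {R} n g b.
Arguments Genc {R} n g x y.

(* Main.v *)
Require Import Defs.
From HB Require Import structures.
From mathcomp Require Import all_boot all_order all_algebra.
From mathcomp Require Import reals trigo boolp.
From mathcomp Require Import ring lra.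
Import Order.TTheory GRing.Theory Num.Theory.
Local Open Scope ring_scope.

Section S.
Variable R : realType.
Variable n : nat.

Definition BD (h : bits n -> R) : op R n :=
  fun x y => if x.1 == y.1 then RY (h x.1) x.2 y.2 else 0.

Lemma RY_add (a b : R) c c' :
  \sum_(z : bool) RY a c z * RY b z c' = RY (a + b) c c'.
Proof.
rewrite big_bool; case: c; case: c'; rewrite /= mulrDl ?cosD ?sinD; ring. Qed.

Lemma BD_mul (h1 h2 : bits n -> R) :
  op_mul (BD h1) (BD h2) = BD (fun b => h1 b + h2 b).
Proof.
apply: funext => x; apply: funext => y; rewrite /op_mul /BD.
rewrite -(pair_bigA _ (fun (b : bits n) (c : bool) => (if x.1 == b then RY (h1 x.1) x.2 c else 0) * (if b == y.1 then RY (h2 b) c y.2 else 0))) /=.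
rewrite (bigD1 x.1) //= eqxx.
rewrite [X in _ + X]big1 ?addr0; last first.
  move=> b hb; apply: big1 => c _; by rewrite eq_sym (negbTE hb) mul0r.
case: eqP => _; first exact: RY_add.
by apply: big1 => c _; rewrite mulr0.
Qed.

Lemma BD0 : @op_id R n = BD (fun _ => 0).
Proof.
apply: funext => -[b c]; apply: funext => -[b' c']; rewrite /op_id /BD /=.
rewrite xpair_eqE; case: eqP => _ //=.
by case: c; case: c'; rewrite /= ?mul0r ?cos0 ?sin0 ?oppr0.
Qed.

Lemma prod_BD (s : seq {set 'I_n}) (a : {set 'I_n} -> R) :
  op_prod [seq CRY A (a A) | A <- s] = BD (fun b => \sum_(A <- s) a A * chi R A b).
Proof.
elim: s => [|A s IH] /=.
  rewrite /op_prod /= BD0; congr BD; apply: funext => b; by rewrite big_nil.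
rewrite /op_prod /= -/(op_prod _) IH.
have -> : CRY A (a A) = BD (fun b => a A * chi R A b) by [].
rewrite BD_mul; congr BD; apply: funext => b; by rewrite big_cons.
Qed.
Definition phi (t s b : bool) : R :=
  if s then (if b then (if t then 1 else -1) else 0) else (if t then 0 else 1).

Lemma prod_eqset (T B : {set 'I_n}) :
  \prod_i (((i \in T) == (i \in B))%:R : R) = (T == B)%:R.
Proof.
case: eqP => [->|/eqP hTB].
  by apply: big1 => i _; rewrite eqxx.
have [i hi] : exists i, (i \in T) != (i \in B).
  apply/existsP; apply: contraR hTB => /existsPn h.
  by apply/eqP/setP => i; move: (h i); rewrite negbK => /eqP.
by rewrite (bigD1 i) //= (negbTE hi) mul0r.
Qed.

Lemma prod_sign (A : {set 'I_n}) :
  \prod_i (if i \in A then -1 else 1 : R) = (-1) ^+ #|A|.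
Proof. by rewrite -big_mkcond /= prodr_const. Qed.

Lemma weight (T S B : {set 'I_n}) :
  \prod_i phi (i \in T) (i \in S) (i \in B) =
  if (T \subset S) && (S \subset B) then (-1) ^+ #|S :\: T| else 0.
Proof.
case: (boolP (T \subset S)) => hTS /=; last first.
  case/subsetPn: hTS => i hT hS.
  by rewrite (bigD1 i) //= /phi hT (negbTE hS) mul0r.
case: (boolP (S \subset B)) => hSB /=; last first.
  case/subsetPn: hSB => i hS hB.
  by rewrite (bigD1 i) //= /phi hS (negbTE hB) mul0r.
rewrite -prod_sign; apply: eq_bigr => i _; rewrite /phi in_setD.
case hS: (i \in S); case hT: (i \in T) => //=.
- by rewrite (subsetP hSB i hS).
- by rewrite (subsetP hSB i hS).
- by rewrite (subsetP hTS i hT) in hS.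
Qed.

Lemma sum_weight (T B : {set 'I_n}) :
  \sum_(S : {set 'I_n}) (if (T \subset S) && (S \subset B) then (-1) ^+ #|S :\: T| else 0 : R)
  = (T == B)%:R.
Proof.
under eq_bigr => S _ do rewrite -weight.
rewrite -prod_eqset.
transitivity (\prod_i (phi (i \in T) true (i \in B) + phi (i \in T) false (i \in B))); last first.
  by apply: eq_bigr => i _; rewrite /phi; case: (i \in T); case: (i \in B); rewrite /= ?addr0 ?add0r ?addNr.
rewrite bigA_distr; apply: eq_bigr => S _; apply: eq_bigr => i _.
by case: (i \in S).
Qed.


Lemma chi_sub (S : {set 'I_n}) (b : bits n) :
  chi R S b = (S \subset [set j | b j])%:R.
Proof.
rewrite /chi; case: (boolP (S \subset _)) => h.
  by apply: big1 => j hj; move: (subsetP h j hj); rewrite inE => ->.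
case/subsetPn: h => j hj; rewrite inE => /negbTE hb.
by rewrite (bigD1 j) //= hb mul0r.
Qed.

Lemma moebius (f : bits n -> R) (b : bits n) :
  f b = \sum_S fhat f S * chi R S b.
Proof.
set B := [set j | b j].
have hB : ind B = b by apply/ffunP => j; rewrite ffunE inE.
transitivity (\sum_(T : {set 'I_n}) \sum_(S : {set 'I_n})
   (if (T \subset S) && (S \subset B) then (-1) ^+ #|S :\: T| else 0 : R) * f (ind T)).
  under eq_bigr => T _ do rewrite -big_distrl /= sum_weight.
  rewrite (bigD1 B) //= eqxx mul1r hB big1 ?addr0 //.
  by move=> T /negbTE ->; rewrite mul0r.
rewrite exchange_big; apply: eq_bigr => S _.
rewrite chi_sub /fhat big_distrl /= [RHS]big_mkcond /=.
apply: eq_bigr => T _.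
by case: (T \subset S); case: (S \subset B); rewrite /= ?mulr1 ?mulr0 ?mul0r.
Qed.
Lemma sum_eqk (x m : nat) : (\sum_(k < m) (x == k : nat))%N = (x < m)%N.
Proof.
elim: m => [|m IH]; first by rewrite big_ord0.
rewrite big_ord_recr /= IH; case: (ltngtP x m) => [h|h|->].
- by rewrite ltnS (ltnW h).
- by rewrite ltnS leqNgt h.
- by rewrite ltnSn.
Qed.

Lemma count_small (d : nat) :
  #|[pred A : {set 'I_n} | (#|A| <= d)%N]| = (\sum_(k < d.+1) 'C(n, k))%N.
Proof.
have hC : forall k, 'C(n, k) = (\sum_(A : {set 'I_n}) (#|A| == k : nat))%N.
  move=> k; rewrite -{1}(card_ord n) -card_draws -sum1_card big_mkcond /=.
  by apply: eq_bigr => A _; rewrite inE; case: eqP.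
under eq_bigr do rewrite hC.
rewrite exchange_big /= -sum1_card big_mkcond /=; apply: eq_bigr => A _.
by rewrite sum_eqk inE ltnS.
Qed.
End S.

Theorem mainTheorem1 (R : realType) (n d : nat) (g : R -> R) :
  (1 <= n)%N -> (d <= n)%N ->
  (forall i : nat, (i < 2 ^ n)%N -> 0 <= g (gridpt n i) <= 1) ->
  deg_le (Theta n g) d ->
  forall s : seq {set 'I_n},
    uniq s -> (forall A : {set 'I_n}, (A \in s) = (#|A| <= d)%N) ->
    Genc n g = op_prod [seq CRY A (fhat (Theta n g) A) | A <- s]
    /\ size s = (\sum_(k < d.+1) 'C(n, k))%N.
Proof.
move=> _ _ _ hdeg s us hs; split.
  rewrite prod_BD.
  change (Genc n g) with (@BD R n (Theta n g)); congr BD; apply: funext => b.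
  rewrite (@moebius R n (Theta n g) b) [RHS]big_uniq //.
  transitivity (\sum_(A : {set 'I_n} | (#|A| <= d)%N) fhat (Theta n g) A * chi R A b); last by apply: eq_bigl => A; rewrite hs.
  rewrite (bigID (fun A : {set 'I_n} => (#|A| <= d)%N)) /= [X in _ + X]big1 ?addr0 //.
  by move=> A; rewrite -ltnNge => h; rewrite hdeg // mul0r.
rewrite -(card_uniqP us) -count_small; apply: eq_card => A.
by rewrite inE /= hs.
Qed.
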